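(* Let $V$ be a finite set of vertical lines and $H$ a finite set of horizontal closed segments in the plane. For a finite set $Q$ of points, let $H_Q\subseteq H$ be the set of segments of $H$ containing no point of $Q$, and let $h(\cdot)$ denote the minimum number of points needed to hit a set of horizontal segments. Suppose that (a) for every point $p$ lying on a line of $V$, $h(H_{\{p\}})=h(H)$, and (b) for every two points $p,q$ lying on two distinct lines of $V$, $h(H_{\{p,q\}})=h(H)$. Then every hitting set for $V\cup H$ has at least $|V|+h(H)$ points.
   Context: A hitting set for a family of subsets of the plane is a finite set of points such that every member contains at least one of the points. Segments may overlap arbitrarily. *)

(* Defs.v *)
From HB Require Import structures.
From mathcomp Require Import all_boot all_order all_algebra.
Set Implicit Arguments. Unset Strict Implicit. Unset Printing Implicit Defensive.
Import Order.TTheory GRing.Theory Num.Theory.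
Local Open Scope ring_scope.

Section Defs.
Variable R : realFieldType.

Definition point := (R * R)%type.

(* a vertical line {x = c} is represented by c *)
Definition on_vline (p : point) (c : R) : bool := p.1 == c.

(* a horizontal closed segment {(x, y0) | a <= x <= b} is represented by
   (y0, (a, b)); it is a genuine (nonempty) segment when a <= b *)
Definition hseg := (R * (R * R))%type.
Definition seg_ok (s : hseg) : bool := s.2.1 <= s.2.2.
Definition on_hseg (p : point) (s : hseg) : bool :=
  (p.2 == s.1) && (s.2.1 <= p.1 <= s.2.2).

Definition hits_segs (P : seq point) (H : seq hseg) : Prop :=
  forall s, s \in H -> exists2 p, p \in P & on_hseg p s.

Definition avoid (H : seq hseg) (Q : seq point) : seq hseg :=
  [seq s <- H | ~~ has (fun q => on_hseg q s) Q].

Definition is_h (H : seq hseg) (k : nat) : Prop :=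
  (exists P : seq point, uniq P /\ size P = k /\ hits_segs P H) /\
  (forall P : seq point, uniq P -> hits_segs P H -> (k <= size P)%N).

Definition hitting_set (Q : seq point) (V : seq R) (H : seq hseg) : Prop :=
  (forall c, c \in V -> exists2 q, q \in Q & on_vline q c) /\ hits_segs Q H.

End Defs.

(* Main.v *)
Require Import Defs.
From mathcomp Require Import zify.
From mathcomp Require Import all_boot all_order all_algebra.
Import Order.TTheory GRing.Theory Num.Theory.
Local Open Scope ring_scope.

Definition ltp {R : realFieldType} (u z : point R) : bool :=
  (u.2 < z.2) || ((u.2 == z.2) && (u.1 < z.1)).
Definition lep {R : realFieldType} (u z : point R) : bool :=
  (u.2 < z.2) || ((u.2 == z.2) && (u.1 <= z.1)).
Definition before {R : realFieldType} (s : hseg R) (z : point R) : bool :=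
  (s.1 < z.2) || ((s.1 == z.2) && (s.2.2 < z.1)).

Lemma side_lt {R : realFieldType} {u z : point R} {s : hseg R} :
  on_hseg u s -> ~~ on_hseg z s -> ltp u z = before s z.
Proof.
case: u => u1 u2; case: z => z1 z2; case: s => s1 [a b].
rewrite /on_hseg /ltp /before /= => /andP[/eqP -> /andP[h1 h2]].
rewrite negb_and negb_and -!ltNge.
case: (ltgtP s1 z2) => //= _ /orP[h|h].
- rewrite [u1 < z1]ltNge (le_trans (ltW h) h1) ltNge (le_trans (ltW h) (le_trans h1 h2)) //.
- by rewrite (le_lt_trans h2 h) h.
Qed.

Lemma side_gt {R : realFieldType} {u z : point R} {s : hseg R} :
  on_hseg u s -> ~~ on_hseg z s -> ltp z u = ~~ before s z.
Proof.
case: u => u1 u2; case: z => z1 z2; case: s => s1 [a b].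
rewrite /on_hseg /ltp /before /= => /andP[/eqP -> /andP[h1 h2]].
rewrite negb_and negb_and -!ltNge.
rewrite [z2 == s1]eq_sym.
case: (ltgtP s1 z2) => //= _ /orP[h|h].
- by rewrite (lt_le_trans h h1) -leNgt (le_trans (ltW h) (le_trans h1 h2)).
- by rewrite h ltNge (le_trans h2 (ltW h)).
Qed.

Lemma ltp_asym {R : realFieldType} {u v : point R} : ltp u v -> ltp v u = false.
Proof.
case: u v => [u1 u2] [v1 v2]; rewrite /ltp /=.
by case: (ltgtP u2 v2) => //= _; case: (ltgtP u1 v1).
Qed.

Lemma lep_ltp {R : realFieldType} {u v : point R} : lep u v -> ltp v u = false.
Proof.
case: u v => [u1 u2] [v1 v2]; rewrite /ltp /lep /=.
by case: (ltgtP u2 v2) => //= _; case: (ltgtP u1 v1).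
Qed.

Lemma lep_total {R : realFieldType} (u v : point R) : lep u v || lep v u.
Proof.
case: u v => [u1 u2] [v1 v2]; rewrite /lep /=.
by case: (ltgtP u2 v2) => //= _; case: (ltgtP u1 v1).
Qed.

Lemma lep_refl {R : realFieldType} (u : point R) : lep u u.
Proof. by rewrite /lep eqxx lexx orbT. Qed.

Lemma lep_trans {R : realFieldType} {u v w : point R} : lep u v -> lep v w -> lep u w.
Proof.
case: u v w => [u1 u2] [v1 v2] [w1 w2]; rewrite /lep /=.
case: (ltgtP u2 v2) => //= h1; case: (ltgtP v2 w2) => //= h2.
- by rewrite (lt_trans h1 h2).
- by rewrite -h2 h1.
- by rewrite h1 h2.
- rewrite h1 h2 eqxx ltxx /=. exact: le_trans.
Qed.

Lemma lep_neq {R : realFieldType} {u v : point R} : lep u v -> u != v -> ltp u v.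
Proof.
case: u v => [u1 u2] [v1 v2]; rewrite /lep /ltp /=.
case: (ltgtP u2 v2) => //= h; rewrite h => /[swap].
by rewrite xpair_eqE eqxx andbT le_eqVlt => /negbTE -> .
Qed.

Lemma exists_max {R : realFieldType} (T : seq (point R)) : T != [::] ->
  exists2 p, p \in T & forall t, t \in T -> lep t p.
Proof.
elim: T => // a T IH _.
case: T IH => [|b T] IH.
  by exists a; rewrite ?mem_seq1 // => t; rewrite mem_seq1 => /eqP ->; apply: lep_refl.
have [p pT pm] := IH isT.
case/orP: (lep_total a p) => hap.
  exists p; first by rewrite in_cons pT orbT.
  by move=> t; rewrite in_cons => /orP[/eqP ->|/pm].
exists a; first by rewrite mem_head.
move=> t; rewrite in_cons => /orP[/eqP ->|/pm h]; first exact: lep_refl.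
exact: lep_trans h hap.
Qed.

Lemma uniq_map_inj {A B : eqType} {f : A -> B} {s : seq A} {x y} :
  uniq (map f s) -> x \in s -> y \in s -> f x = f y -> x = y.
Proof.
elim: s => //= a s IH /andP[ha hs]; rewrite !in_cons.
case/orP=> [/eqP->|xs]; case/orP=> [/eqP->|ys] e //.
- by move: ha; rewrite e (map_f f ys).
- by move: ha; rewrite -e (map_f f xs).
- exact: IH.
Qed.

Lemma count_disj {A : Type} (a b : pred A) (P : seq A) :
  (forall x, a x -> b x = false) -> (count a P + count b P <= size P)%N.
Proof.
move=> hab; elim: P => //= x P IH.
case ax: (a x); first by rewrite (hab x ax) /=; lia.
case: (b x) => /=; lia.
Qed.

Lemma uniq_split {R : realFieldType} (P1 P2 : seq (point R)) q :
  uniq P1 -> uniq P2 -> uniq (filter (ltp^~ q) P1 ++ filter (ltp q) P2).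
Proof.
move=> u1 u2; rewrite cat_uniq !filter_uniq //= andbT; apply/hasPn => x.
rewrite !mem_filter => /andP[hqx _]; apply/negP => /andP[hxq _].
by rewrite ltp_asym in hqx.
Qed.

Lemma avoid0 {R : realFieldType} (H : seq (hseg R)) : avoid H [::] = H.
Proof. by elim: H => //= s H ->. Qed.

Lemma mem_avoid {R : realFieldType} (H : seq (hseg R)) T s :
  (s \in avoid H T) = ~~ has (fun q => on_hseg q s) T && (s \in H).
Proof. by rewrite mem_filter. Qed.

Lemma claim (R : realFieldType) (V : seq R) (H : seq (hseg R)) k
  (hk : is_h H k)
  (ha : forall (p : point R) (c : R), c \in V -> on_vline p c ->
          forall k, is_h H k <-> is_h (avoid H [:: p]) k)
  (hb : forall (p q : point R) (c d : R), c \in V -> d \in V -> c != d ->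
          on_vline p c -> on_vline q d ->
          forall k, is_h H k <-> is_h (avoid H [:: p; q]) k) :
  forall n (T : seq (point R)), size T = n ->
  (forall t, t \in T -> t.1 \in V) -> uniq (map fst T) ->
  forall P, uniq P -> hits_segs P (avoid H T) -> (k <= size P)%N.
Proof.
elim=> [|n IH] T.
  by case: T => // _ _ _ P uP; rewrite avoid0; apply: hk.2.
move=> sT TV uT.
have uT' : uniq T by move: uT; apply: contraTT => /negP nu; apply/negP => h;
  apply: nu; move: h; apply: map_uniq.
case: n IH sT => [|n] IH sT.
  case: T sT TV uT uT' => [|t [|? ?]] // _ TV _ _ P uP hP.
  have := (ha t t.1 (TV t (mem_head _ _)) (eqxx _) k).1 hk.
  by case=> _ /(_ P uP hP).
move=> P uP hP.
have [p pT pm] : exists2 p, p \in T & forall t, t \in T -> lep t p.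
  by apply: exists_max; case: T sT {TV uT uT' hP}.
set T' := rem p T.
have sT' : size T' = n.+1 by rewrite /T' size_rem // sT.
have memT' : forall t, (t \in T') = (t != p) && (t \in T).
  by move=> t; rewrite /T' (mem_rem_uniq _ uT').
have [q qT' qm] : exists2 q, q \in T' & forall t, t \in T' -> lep t q.
  by apply: exists_max; case: (T') sT'.
have := qT'; rewrite memT' => /andP[qnp qT].
have ltqp : ltp q p by apply: lep_neq => //; apply: pm.
have pq1 : p.1 != q.1.
  apply/negP => /eqP e; move: qnp; by rewrite (uniq_map_inj uT pT qT e) eqxx.
have uT'm : uniq (map fst T').
  exact: subseq_uniq (map_subseq _ (rem_subseq p T)) uT.
have [[P2 [uP2 [sP2 hP2]]] _] := (ha q q.1 (TV q qT) (eqxx _) k).1 hk.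
have [_ lb2] := (hb p q p.1 q.1 (TV p pT) (TV q qT) pq1 (eqxx _) (eqxx _) k).1 hk.
set X1 := filter (ltp^~ q) P ++ filter (ltp q) P2.
set X2 := filter (ltp^~ q) P2 ++ filter (ltp q) P.
have h1 : (k <= size X1)%N.
  apply: (IH T' sT') => //.
  - by move=> t; rewrite memT' => /andP[_ /TV].
  - exact: uniq_split.
  move=> s; rewrite mem_avoid => /andP[/hasPn nT' sH].
  have nq : ~~ on_hseg q s by apply: nT'.
  case bs: (before s q).
  - have np : ~~ on_hseg p s.
      by apply/negP => ps; move: (side_lt ps nq); rewrite bs (ltp_asym ltqp).
    have sT1 : s \in avoid H T.
      rewrite mem_avoid sH andbT; apply/hasPn => t tT.
      case: (eqVneq t p) => [->//|tnp]; apply: nT'; by rewrite memT' tnp.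
    have [u uPu us] := hP s sT1.
    exists u => //; rewrite mem_cat mem_filter uPu (side_lt us nq) bs //.
  - have sq : s \in avoid H [:: q] by rewrite mem_avoid /= sH orbF nq.
    have [u uPu us] := hP2 s sq.
    exists u => //; rewrite mem_cat !mem_filter uPu (side_gt us nq) bs /= orbT //.
have h2 : (k <= size X2)%N.
  apply: lb2; first exact: uniq_split.
  move=> s; rewrite mem_avoid /= orbF negb_or => /andP[/andP[np nq] sH].
  case bs: (before s q).
  - have sq : s \in avoid H [:: q] by rewrite mem_avoid /= sH orbF nq.
    have [u uPu us] := hP2 s sq.
    exists u => //; rewrite mem_cat mem_filter uPu (side_lt us nq) bs //.
  - have sT1 : s \in avoid H T.
      rewrite mem_avoid sH andbT; apply/hasPn => t tT.
      case: (eqVneq t p) => [->//|tnp].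
      have tT' : t \in T' by rewrite memT' tnp.
      apply/negP => ts; move: (side_gt ts nq); rewrite bs /=.
      by rewrite (lep_ltp (qm t tT')).
    have [u uPu us] := hP s sT1.
    exists u => //; rewrite mem_cat !mem_filter uPu (side_gt us nq) bs /= orbT //.
have c1 : (count (ltp^~ q) P + count (ltp q) P <= size P)%N.
  by apply: count_disj => x h; apply: ltp_asym.
have c2 : (count (ltp^~ q) P2 + count (ltp q) P2 <= size P2)%N.
  by apply: count_disj => x h; apply: ltp_asym.
move: h1 h2 c1 c2; rewrite /X1 /X2 !size_cat !size_filter sP2; lia.
Qed.

Lemma choose_S {R : realFieldType} (V : seq R) (Q : seq (point R)) :
  (forall c, c \in V -> exists2 q, q \in Q & on_vline q c) ->
  exists S : seq (point R), map fst S = V /\ {subset S <= Q}.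
Proof.
elim: V => [|c V IH] h; first by exists [::].
have [S [e sub]] : exists S : seq (point R), map fst S = V /\ {subset S <= Q}.
  by apply: IH => d dV; apply: h; rewrite in_cons dV orbT.
have [q qQ /eqP qc] := h c (mem_head _ _).
exists (q :: S); split; first by rewrite /= qc e.
by move=> x; rewrite in_cons => /orP[/eqP->|/sub].
Qed.

Theorem mainTheorem11 (R : realFieldType) (V : seq R) (H : seq (hseg R))
  (hV : uniq V) (hH : forall s, s \in H -> seg_ok s)
  (ha : forall (p : point R) (c : R), c \in V -> on_vline p c ->
          forall k, is_h H k <-> is_h (avoid H [:: p]) k)
  (hb : forall (p q : point R) (c d : R), c \in V -> d \in V -> c != d ->
          on_vline p c -> on_vline q d ->
          forall k, is_h H k <-> is_h (avoid H [:: p; q]) k) :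
  forall (Q : seq (point R)), uniq Q -> hitting_set Q V H ->
  forall k, is_h H k -> (size V + k <= size Q)%N.
Proof.
move=> Q uQ [hV' hQ] k hk.
have [S [eS subS]] := choose_S _ _ hV'.
have uS : uniq S by move: hV; rewrite -eS; apply: map_uniq.
set Q' := filter (fun x => x \notin S) Q.
have hk' : (k <= size Q')%N.
  apply: (@claim R V H k hk ha hb (size S) S erefl).
  - by move=> t tS; rewrite -eS; apply: map_f.
  - by rewrite eS.
  - exact: filter_uniq.
  move=> s; rewrite mem_avoid => /andP[/hasPn nS sH].
  have [u uQu us] := hQ s sH.
  exists u => //; rewrite mem_filter uQu andbT.
  by apply/negP => /nS; rewrite us.
have sS : (size S <= count (mem S) Q)%N.
  rewrite -size_filter; apply: uniq_leq_size => // x xS.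
  by rewrite mem_filter; apply/andP; split => //; apply: subS.
have := count_predC (mem S) Q.
move: hk' sS; rewrite /Q' size_filter -eS size_map.
have -> : count (fun x => x \notin S) Q = count (predC (mem S)) Q by [].
move=> a b c; rewrite -c; exact: leq_add b a.
Qed.
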